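(* Let $S\subseteq(0,1)$ be an open set having $0$ as a limit point, and let $f:S\to(0,1)$ be differentiable with $f'(p)=\Omega(f(p)/p)$ as $p\to 0$. Then every (possibly randomized) Bernoulli factory for $f$ that is fast satisfies $\mathbb E[N]=\Omega(f(p)/p)$ as $p\to0$; that is, there exist $C',\delta'>0$ such that $\mathbb E[N]\ge C' f(p)/p$ for all $p\in S\cap(0,\delta')$.
   Context: For positive functions $f_1,f_2$, $f_1(x)=\Omega(f_2(x))$ as $x\to x_0$ means there are constants $C,\delta>0$ with $f_1(x)\ge Cf_2(x)$ for all $x$ in the domain with $|x-x_0|<\delta$. Let $X=(X_i)$ be i.i.d. Bernoulli with parameter $p\in S$ and $U=(U_i)$ i.i.d. uniform on $(0,1)$, independent of $X$. A (possibly randomized) Bernoulli factory for $f$ consists of measurable stopping functions $\tau_i(x_1,u_1;\dots;x_i,u_i)\in\{0,1\}$ and measurable output functions $\gamma_n(x_1,u_1;\dots;x_n,u_n)\in\{0,1\}$; $N=\min\{i:\tau_i(X_1,U_1;\dots;X_i,U_i)=1\}$ is assumed finite almost surely, and the output $Y=\gamma_N(X_1,U_1;\dots;X_N,U_N)$ satisfies $\Pr[Y=1]=f(p)$ for all $p\in S$. The factory is fast if for every $p\in S$ there exist $A>0$, $\beta<1$ with $\Pr[N>n]\le A\beta^n$ for all $n$. *)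

(* Defs.v *)
From Stdlib Require Import Reals Lra Lia List Classical ClassicalEpsilon.
Open Scope R_scope.

(** Points of (0,1)^n are represented as u : nat -> R, only coordinates
    0..n-1 being relevant (coordinate j stands for U_{j+1}). *)

Definition in_box (n : nat) (a b : nat -> R) (u : nat -> R) : Prop :=
  forall i, (i < n)%nat -> a i < u i < b i.

Definition unit_cube (n : nat) : (nat -> R) -> Prop :=
  in_box n (fun _ => 0) (fun _ => 1).

Fixpoint vol (n : nat) (a b : nat -> R) : R :=
  match n with
  | O => 1
  | S m => vol m a b * (b m - a m)
  end.

(** v is the total volume of some countable cover of A ∩ (0,1)^n by open
    boxes (the flag c k says whether the k-th box is used). *)
Definition cover_sum (n : nat) (A : (nat -> R) -> Prop) (v : R) : Prop :=
  exists (c : nat -> bool) (a b : nat -> nat -> R),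
    (forall k i, a k i <= b k i) /\
    (forall u, unit_cube n u -> A u -> exists k, c k = true /\ in_box n (a k) (b k) u) /\
    infinite_sum (fun k => if c k then vol n (a k) (b k) else 0) v.

Definition is_glb (E : R -> Prop) (m : R) : Prop :=
  (forall v, E v -> m <= v) /\ (forall m', (forall v, E v -> m' <= v) -> m' <= m).

(** Lebesgue (outer) measure of A ∩ (0,1)^n, i.e. the probability that
    (U_1,...,U_n) lies in A. *)
Definition leb (n : nat) (A : (nat -> R) -> Prop) : R :=
  epsilon (inhabits 0) (fun m => is_glb (cover_sum n A) m).

(** Borel subsets of R^n (sets of u depending on coordinates < n). *)
Inductive borel (n : nat) : ((nat -> R) -> Prop) -> Prop :=
| borel_box : forall a b, borel n (in_box n a b)
| borel_compl : forall A, borel n A -> borel n (fun u => ~ A u)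
| borel_union : forall F : nat -> (nat -> R) -> Prop,
    (forall k, borel n (F k)) -> borel n (fun u => exists k, F k u)
| borel_ext : forall A B, borel n A -> (forall u, A u <-> B u) -> borel n B.

Fixpoint words (n : nat) : list (list bool) :=
  match n with
  | O => nil :: nil
  | S m => flat_map (fun w => (true :: w) :: (false :: w) :: nil) (words m)
  end.

Definition sumR (l : list R) : R := fold_right Rplus 0 l.

Definition wt (p : R) (w : list bool) : R :=
  fold_right (fun (b : bool) (acc : R) => (if b then p else 1 - p) * acc) 1 w.

(** the sequence x with x j = X_{j+1} given by the word w *)
Definition xof (w : list bool) : nat -> bool := fun j => nth j w false.

(** A (randomized) Bernoulli-factory scheme: stopping functions tau i and
    output functions gamma n (meaningful for i, n >= 1), taking the
    sequences x, u, of which only the coordinates < i (resp. < n) matter. *)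
Definition scheme := nat -> (nat -> bool) -> (nat -> R) -> bool.

Definition PrN_gt (tau : scheme) (p : R) (n : nat) : R :=
  sumR (map (fun w => wt p w *
         leb n (fun u => forall i, (1 <= i <= n)%nat -> tau i (xof w) u = false))
       (words n)).

Definition PrN_eq_Y1 (tau gamma : scheme) (p : R) (n : nat) : R :=
  sumR (map (fun w => wt p w *
         leb n (fun u => (forall i, (1 <= i < n)%nat -> tau i (xof w) u = false) /\
                         tau n (xof w) u = true /\ gamma n (xof w) u = true))
       (words n)).

Definition admissible (g : scheme) : Prop :=
  forall i, (1 <= i)%nat ->
    (forall x, borel i (fun u => g i x u = true)) /\
    (forall x x' u, (forall j, (j < i)%nat -> x j = x' j) -> g i x u = g i x' u).

Definition bernoulli_factory (Dom : R -> Prop) (f : R -> R) (tau gamma : scheme) : Prop :=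
  admissible tau /\ admissible gamma /\
  forall p, Dom p ->
    Un_cv (PrN_gt tau p) 0 /\                                  (* N < oo a.s. *)
    infinite_sum (fun k => PrN_eq_Y1 tau gamma p (S k)) (f p).

Definition fast (Dom : R -> Prop) (tau : scheme) : Prop :=
  forall p, Dom p -> exists A beta, A > 0 /\ beta < 1 /\
    forall n, PrN_gt tau p n <= A * beta ^ n.

(** E[N] >= c, with E[N] = sum_{n>=0} Pr[N > n] in [0, +oo] *)
Definition ExpN_ge (tau : scheme) (p c : R) : Prop :=
  forall e, infinite_sum (fun n => PrN_gt tau p n) e -> c <= e.

(* Main.v *)
Require Import Defs.
From Stdlib Require Import Reals Lra Lia List Classical ClassicalEpsilon FunctionalExtensionality PropExtensionality Cantor.
Open Scope R_scope.

Definition psum (g : nat -> R) (M : nat) : R := sumR (map g (seq 0 M)).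

Lemma sumR_app l1 l2 : sumR (l1 ++ l2) = sumR l1 + sumR l2.
Proof. induction l1; simpl; [lra| rewrite IHl1; lra]. Qed.

Lemma psum_S g M : psum g (S M) = psum g M + g M.
Proof. unfold psum. rewrite seq_S, map_app, sumR_app. simpl. lra. Qed.

Lemma psum_0 g : psum g 0 = 0.
Proof. reflexivity. Qed.

Lemma sum_f_psum g n : sum_f_R0 g n = psum g (S n).
Proof. induction n; simpl sum_f_R0. unfold psum; simpl; lra. rewrite IHn, (psum_S g (S n)). reflexivity. Qed.

Lemma psum_ext g h M : (forall k, (k < M)%nat -> g k = h k) -> psum g M = psum h M.
Proof. induction M; intros H; [reflexivity|]. rewrite !psum_S, IHM by (intros; apply H; lia). rewrite H by lia. reflexivity. Qed.

Lemma psum_plus g h M : psum (fun k => g k + h k) M = psum g M + psum h M.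
Proof. induction M; [unfold psum; simpl; lra|]. rewrite !psum_S, IHM. lra. Qed.

Lemma psum_scal c g M : psum (fun k => c * g k) M = c * psum g M.
Proof. induction M; [unfold psum; simpl; lra|]. rewrite !psum_S, IHM. lra. Qed.

Lemma psum_le g h M : (forall k, (k < M)%nat -> g k <= h k) -> psum g M <= psum h M.
Proof. induction M; intros H; [unfold psum; simpl; lra|]. rewrite !psum_S. assert (g M <= h M) by (apply H; lia). assert (psum g M <= psum h M) by (apply IHM; intros; apply H; lia). lra. Qed.

Lemma psum_nonneg g M : (forall k, 0 <= g k) -> 0 <= psum g M.
Proof. intros H. induction M; [unfold psum; simpl; lra|]. rewrite psum_S. specialize (H M). lra. Qed.

Lemma psum_mono g M M' : (forall k, 0 <= g k) -> (M <= M')%nat -> psum g M <= psum g M'.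
Proof. intros H Hle. induction Hle; [lra|]. rewrite psum_S. specialize (H m). lra. Qed.

Lemma lim_le u l s : Un_cv u l -> (forall n, u n <= s) -> l <= s.
Proof.
  intros Hc Hu. destruct (Rle_dec l s) as [|Hn]; [assumption|].
  destruct (Hc (l - s)) as [N HN]; [lra|]. specialize (HN N (le_n N)). specialize (Hu N).
  unfold Rdist in HN. apply Rabs_def2 in HN. lra.
Qed.

Lemma lim_ge u l s : Un_cv u l -> (forall n, s <= u n) -> s <= l.
Proof.
  intros Hc Hu. destruct (Rle_dec s l) as [|Hn]; [assumption|].
  destruct (Hc (s - l)) as [N HN]; [lra|]. specialize (HN N (le_n N)). specialize (Hu N).
  unfold Rdist in HN. apply Rabs_def2 in HN. lra.
Qed.

Lemma isum_cv g l : infinite_sum g l -> Un_cv (fun n => psum g (S n)) l.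
Proof. intros H e He. destruct (H e He) as [N HN]. exists N. intros n Hn. rewrite <- sum_f_psum. auto. Qed.

Lemma cv_isum g l : Un_cv (fun n => psum g (S n)) l -> infinite_sum g l.
Proof. intros H e He. destruct (H e He) as [N HN]. exists N. intros n Hn. rewrite sum_f_psum. auto. Qed.

Lemma ps_le_lim g l M : (forall k, 0 <= g k) -> infinite_sum g l -> psum g M <= l.
Proof.
  intros Hg Hl. apply isum_cv in Hl.
  destruct (Rle_dec (psum g M) l) as [|Hn]; [assumption|].
  destruct (Hl (psum g M - l)) as [N HN]; [lra|].
  specialize (HN (max N M) (Nat.le_max_l _ _)).
  assert (psum g M <= psum g (S (max N M))) by (apply psum_mono; [auto|lia]).
  unfold Rdist in HN. apply Rabs_def2 in HN. lra.
Qed.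

Lemma isum_nonneg g l : (forall k, 0 <= g k) -> infinite_sum g l -> 0 <= l.
Proof. intros Hg Hl. apply isum_cv in Hl. apply (lim_ge _ _ _ Hl). intros; apply psum_nonneg; auto. Qed.

Lemma nn_conv g s : (forall k, 0 <= g k) -> (forall M, psum g M <= s) -> exists l, infinite_sum g l /\ l <= s.
Proof.
  intros Hg Hs.
  destruct (growing_cv (fun n => psum g (S n))) as [l Hl].
  - intro n. rewrite (psum_S g (S n)). specialize (Hg (S n)). lra.
  - exists s. intros x [i ->]. apply Hs.
  - exists l. split. apply cv_isum; auto. apply (lim_le _ _ _ Hl). intros; apply Hs.
Qed.

Lemma isum_plus g h l1 l2 : infinite_sum g l1 -> infinite_sum h l2 -> infinite_sum (fun k => g k + h k) (l1 + l2).
Proof.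
  intros H1 H2. apply cv_isum. apply isum_cv in H1. apply isum_cv in H2.
  pose proof (CV_plus _ _ _ _ H1 H2) as H. intros e He. destruct (H e He) as [N HN]. exists N.
  intros n Hn. rewrite psum_plus. apply HN; auto.
Qed.

Lemma isum_unique g l1 l2 : infinite_sum g l1 -> infinite_sum g l2 -> l1 = l2.
Proof. intros H1 H2. apply (UL_sequence (sum_f_R0 g)); assumption. Qed.

Lemma set_ext {T} (P Q : T -> Prop) : (forall u, P u <-> Q u) -> P = Q.
Proof. intros H. apply functional_extensionality. intros u. apply propositional_extensionality. auto. Qed.

Lemma isum_ext g h l : (forall k, g k = h k) -> infinite_sum g l -> infinite_sum h l.
Proof. intros E H. replace h with g; auto. apply functional_extensionality; auto. Qed.
Open Scope R_scope.

Lemma vol_nonneg n a b : (forall i, a i <= b i) -> 0 <= vol n a b.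
Proof. intros H. induction n; simpl; [lra|]. specialize (H n). apply Rmult_le_pos; lra. Qed.

Lemma vol_ext n a b a' b' : (forall i, (i < n)%nat -> a i = a' i /\ b i = b' i) -> vol n a b = vol n a' b'.
Proof. induction n; intros H; simpl; [reflexivity|]. rewrite IHn by (intros; apply H; lia).
  destruct (H n) as [-> ->]; [lia|reflexivity]. Qed.

Lemma cover_sum_nonneg n A v : cover_sum n A v -> 0 <= v.
Proof.
  intros (c & a & b & Hab & _ & Hs). refine (isum_nonneg _ _ _ Hs).
  intros k. destruct (c k); [apply vol_nonneg; auto|lra].
Qed.

Lemma isum_single v : infinite_sum (fun k => if Nat.eqb k 0 then v else 0) v.
Proof.
  apply cv_isum. intros e He. exists 0%nat. intros n _.
  replace (psum _ (S n)) with v. unfold Rdist. rewrite Rminus_diag, Rabs_R0. lra.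
  induction n. unfold psum; simpl; lra. rewrite psum_S, <- IHn. simpl. lra.
Qed.

Lemma cover_single n A a b v : (forall i, a i <= b i) -> vol n a b = v ->
  (forall u, unit_cube n u -> A u -> in_box n a b u) -> cover_sum n A v.
Proof.
  intros Hab Hv Hc; subst v.
  exists (fun k => Nat.eqb k 0), (fun _ => a), (fun _ => b). split; [intros; auto|]. split.
  - intros u Hu HA. exists 0%nat. split; auto.
  - eapply isum_ext; [|apply (isum_single (vol n a b))]. intros k. simpl. destruct (Nat.eqb k 0); reflexivity.
Qed.

Lemma vol_01 n : vol n (fun _ => 0) (fun _ => 1) = 1.
Proof. induction n; simpl; [reflexivity|]. rewrite IHn. lra. Qed.

Lemma cover_sum_one n A : cover_sum n A 1.
Proof. apply (cover_single n A (fun _ => 0) (fun _ => 1)); [intros; lra|apply vol_01|auto]. Qed.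

Lemma glb_exists n A : exists m, is_glb (cover_sum n A) m.
Proof.
  destruct (completeness (fun x => cover_sum n A (- x))) as [m [Hub Hl]].
  - exists 0. intros x Hx. apply cover_sum_nonneg in Hx. lra.
  - exists (-1). cbv beta. replace (- -1) with 1 by lra. apply cover_sum_one.
  - exists (- m). split.
    + intros v Hv. assert (- v <= m) by (apply Hub; rewrite Ropp_involutive; auto). lra.
    + intros m' Hm'. assert (m <= - m'). { apply Hl. intros x Hx. apply Hm' in Hx. lra. } lra.
Qed.

Lemma leb_glb n A : is_glb (cover_sum n A) (leb n A).
Proof. unfold leb. apply epsilon_spec. apply glb_exists. Qed.

Lemma leb_le_cover n A v : cover_sum n A v -> leb n A <= v.
Proof. intros H. apply (proj1 (leb_glb n A)); auto. Qed.

Lemma leb_nonneg n A : 0 <= leb n A.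
Proof. apply (proj2 (leb_glb n A)). apply cover_sum_nonneg. Qed.

Lemma leb_le1 n A : leb n A <= 1.
Proof. apply leb_le_cover, cover_sum_one. Qed.

Lemma leb_approx n A e : 0 < e -> exists v, cover_sum n A v /\ v < leb n A + e.
Proof.
  intros He. apply NNPP. intros Hn.
  assert (leb n A + e <= leb n A). { apply (proj2 (leb_glb n A)). intros v Hv.
    apply Rnot_lt_le. intros Hlt. apply Hn. exists v; auto. } lra.
Qed.

Lemma leb_ge n A s : (forall v, cover_sum n A v -> s <= v) -> s <= leb n A.
Proof. intros H. apply (proj2 (leb_glb n A)); auto. Qed.

Lemma leb_mono n A B : (forall u, unit_cube n u -> A u -> B u) -> leb n A <= leb n B.
Proof.
  intros H. apply leb_ge. intros v (c & a & b & Hab & Hc & Hs). apply leb_le_cover.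
  exists c, a, b. repeat split; auto.
Qed.

Lemma leb_empty n : leb n (fun _ => False) = 0.
Proof.
  apply Rle_antisym; [|apply leb_nonneg]. apply leb_le_cover.
  exists (fun _ => false), (fun _ _ => 0), (fun _ _ => 0). split; [intros; lra|]. split.
  - intros u _ [].
  - apply cv_isum. intros e He. exists 0%nat. intros m _. replace (psum _ (S m)) with 0.
    unfold Rdist. rewrite Rminus_diag, Rabs_R0. lra. induction m. unfold psum; simpl; lra. rewrite psum_S, <- IHm. lra.
Qed.
Open Scope R_scope.

Lemma nodup_map_inj {A B} (f : A -> B) l : (forall x y, f x = f y -> x = y) -> NoDup l -> NoDup (map f l).
Proof.
  intros Hf H. induction H; simpl; constructor; auto.
  intros Hin. apply in_map_iff in Hin. destruct Hin as [y [Hy Hyl]]. apply Hf in Hy. subst; auto.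
Qed.

Lemma sum_nodup_incl {A} (F : A -> R) (l l' : list A) :
  (forall x, 0 <= F x) -> NoDup l -> incl l l' -> sumR (map F l) <= sumR (map F l').
Proof.
  intros HF Hnd. revert l'. induction Hnd as [|x l0 Hx Hnd IH]; intros l' Hi.
  - simpl. induction l'; simpl; [lra|]. specialize (HF a). assert (0 <= sumR (map F l')).
    { apply IHl'. intros y []. } lra.
  - assert (Hxl : In x l') by (apply Hi; left; auto).
    destruct (in_split _ _ Hxl) as [l1 [l2 ->]].
    assert (incl l0 (l1 ++ l2)).
    { intros y Hy. assert (Hy' : In y (l1 ++ x :: l2)) by (apply Hi; right; auto).
      apply in_app_or in Hy'. apply in_or_app. destruct Hy' as [|[<-|]]; auto. contradiction. }
    specialize (IH _ H). rewrite map_app in *. rewrite sumR_app in *. simpl. lra.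
Qed.

Lemma sum_list_prod (F : nat * nat -> R) l1 l2 :
  sumR (map F (list_prod l1 l2)) = sumR (map (fun k => sumR (map (fun j => F (k, j)) l2)) l1).
Proof.
  induction l1; simpl; [reflexivity|]. rewrite map_app, sumR_app, IHl1, map_map. reflexivity.
Qed.

Lemma geo e M : psum (fun k => e / 2 ^ (S k)) M = e - e / 2 ^ M.
Proof.
  induction M. unfold psum; simpl; field. rewrite psum_S, IHM. simpl. field. apply pow_nonzero. lra.
Qed.

Lemma geo_le e M : 0 <= e -> psum (fun k => e / 2 ^ (S k)) M <= e.
Proof. intros He. rewrite geo. assert (0 <= e / 2 ^ M). { unfold Rdiv. apply Rmult_le_pos; auto. apply Rlt_le, Rinv_0_lt_compat, pow_lt; lra. } lra. Qed.

Definition cov_data := (((nat -> bool) * (nat -> nat -> R)) * (nat -> nat -> R) * R)%type.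

Definition cov_ok n (A : (nat -> R) -> Prop) (x : cov_data) : Prop :=
  let '(c, a, b, v) := x in
    (forall k i, a k i <= b k i) /\
    (forall u, unit_cube n u -> A u -> exists k, c k = true /\ in_box n (a k) (b k) u) /\
    infinite_sum (fun k => if c k then vol n (a k) (b k) else 0) v.

Lemma leb_csub n (B : nat -> (nat -> R) -> Prop) s :
  (forall M, psum (fun k => leb n (B k)) M <= s) -> leb n (fun u => exists k, B k u) <= s.
Proof.
  intros Hs.
  cut (forall e, 0 < e -> leb n (fun u => exists k, B k u) <= s + e).
  { intros H. apply Rnot_lt_le. intros Hlt. specialize (H ((leb n (fun u => exists k, B k u) - s)/2)). lra. }
  intros e He.
  assert (Hex : forall k, exists x : cov_data, cov_ok n (B k) x /\ snd x < leb n (B k) + e / 2 ^ (S k)).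
  { intros k. destruct (leb_approx n (B k) (e / 2 ^ (S k))) as [v [(c & a & b & H1 & H2 & H3) Hv]].
    { apply Rdiv_lt_0_compat; auto. apply pow_lt; lra. }
    exists (c, a, b, v). simpl. auto. }
  set (d := ((fun _ : nat => false), (fun _ _ : nat => 0), (fun _ _ : nat => 0), 0) : cov_data).
  set (X := fun k => epsilon (inhabits d) (fun x => cov_ok n (B k) x /\ snd x < leb n (B k) + e / 2 ^ (S k))).
  assert (HX : forall k, cov_ok n (B k) (X k) /\ snd (X k) < leb n (B k) + e / 2 ^ (S k)).
  { intros k. apply (epsilon_spec (inhabits d)). apply Hex. }
  set (C := fun k => fst (fst (fst (X k)))).
  set (Aa := fun k => snd (fst (fst (X k)))).
  set (Bb := fun k => snd (fst (X k))).
  set (V := fun k => snd (X k)).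
  assert (HX' : forall k, (forall j i, Aa k j i <= Bb k j i) /\
    (forall u, unit_cube n u -> B k u -> exists j, C k j = true /\ in_box n (Aa k j) (Bb k j) u) /\
    infinite_sum (fun j => if C k j then vol n (Aa k j) (Bb k j) else 0) (V k) /\
    V k < leb n (B k) + e / 2 ^ (S k)).
  { intros k. destruct (HX k) as [H1 H2]. unfold C, Aa, Bb, V. destruct (X k) as [[[c a] b] v]. simpl in *. tauto. }
  set (T := fun k j => if C k j then vol n (Aa k j) (Bb k j) else 0).
  assert (HT : forall k j, 0 <= T k j).
  { intros k j. unfold T. destruct (C k j); [apply vol_nonneg; apply HX'|lra]. }
  set (g := fun m => T (fst (of_nat m)) (snd (of_nat m))).
  destruct (nn_conv g (s + e)) as [W [HW HWle]].
  - intros m. apply HT.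
  - intros M. unfold g, psum.
    rewrite <- (map_map of_nat (fun p => T (fst p) (snd p))).
    apply Rle_trans with (sumR (map (fun p => T (fst p) (snd p)) (list_prod (seq 0 M) (seq 0 M)))).
    + apply sum_nodup_incl.
      * intros; apply HT.
      * apply nodup_map_inj; [|apply seq_NoDup]. intros x y Hxy.
        rewrite <- (cancel_to_of x), <- (cancel_to_of y), Hxy. reflexivity.
      * intros [x y] Hin. apply in_map_iff in Hin. destruct Hin as [m [Hm Hmi]].
        apply in_seq in Hmi. pose proof (to_nat_non_decreasing x y) as Hnd.
        rewrite <- Hm, cancel_to_of in Hnd. apply in_prod; apply in_seq; lia.
    + rewrite sum_list_prod. simpl.
      apply Rle_trans with (psum V M + 0).
      * rewrite Rplus_0_r. apply psum_le. intros k _. apply ps_le_lim; [apply HT| apply HX'].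
      * apply Rle_trans with (psum (fun k => leb n (B k)) M + psum (fun k => e / 2 ^ (S k)) M).
        { rewrite <- psum_plus, Rplus_0_r. apply psum_le. intros k _. apply Rlt_le, HX'. }
        pose proof (Hs M). pose proof (geo_le e M). lra.
  - apply Rle_trans with W; auto. apply leb_le_cover.
    exists (fun m => C (fst (of_nat m)) (snd (of_nat m))),
           (fun m => Aa (fst (of_nat m)) (snd (of_nat m))),
           (fun m => Bb (fst (of_nat m)) (snd (of_nat m))).
    split; [intros; apply HX'|]. split.
    + intros u Hu [k Hk]. destruct (proj1 (proj2 (HX' k)) u Hu Hk) as [j Hj].
      exists (to_nat (k, j)). rewrite cancel_of_to. simpl. auto.
    + exact HW.
Qed.
Open Scope R_scope.

Lemma leb_sub2 n X Y : leb n (fun u => X u \/ Y u) <= leb n X + leb n Y.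
Proof.
  set (B := fun k : nat => match k with 0%nat => X | 1%nat => Y | _ => fun _ => False end).
  apply Rle_trans with (leb n (fun u => exists k, B k u)).
  { apply leb_mono. intros u _ [H|H]; [exists 0%nat|exists 1%nat]; exact H. }
  apply leb_csub. intros M.
  assert (HX := leb_nonneg n X). assert (HY := leb_nonneg n Y).
  destruct M as [|[|M]]. unfold psum; simpl; lra. unfold psum; simpl; lra.
  induction M. unfold psum; simpl; lra. rewrite psum_S. simpl (B (S (S M))). rewrite leb_empty. lra.
Qed.

Definition Meas n (T : (nat -> R) -> Prop) : Prop :=
  forall A, leb n (fun u => A u /\ T u) + leb n (fun u => A u /\ ~ T u) <= leb n A.

Lemma Meas_ext n T T' : Meas n T -> (forall u, T u <-> T' u) -> Meas n T'.
Proof. intros H E. replace T' with T; auto. apply set_ext; auto. Qed.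

Lemma Meas_true n : Meas n (fun _ => True).
Proof.
  intros A. replace (fun u => A u /\ ~ True) with (fun _ : nat -> R => False).
  replace (fun u => A u /\ True) with A. rewrite leb_empty. lra.
  apply set_ext; tauto. apply set_ext; tauto.
Qed.

Lemma Meas_compl n T : Meas n T -> Meas n (fun u => ~ T u).
Proof.
  intros H A. replace (fun u => A u /\ ~ ~ T u) with (fun u => A u /\ T u).
  specialize (H A). lra. apply set_ext. intros u. split; [tauto|]. intros [? ?]. split; auto. apply NNPP; auto.
Qed.

Lemma Meas_union n S T : Meas n S -> Meas n T -> Meas n (fun u => S u \/ T u).
Proof.
  intros HS HT A.
  pose proof (HS A) as H1.
  pose proof (HT (fun u => A u /\ ~ S u)) as H2.
  pose proof (leb_sub2 n (fun u => A u /\ S u) (fun u => (A u /\ ~ S u) /\ T u)) as H3.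
  replace (fun u => A u /\ ~ (S u \/ T u)) with (fun u => (A u /\ ~ S u) /\ ~ T u) by (apply set_ext; tauto).
  apply Rle_trans with (leb n (fun u => A u /\ S u \/ (A u /\ ~ S u) /\ T u) + leb n (fun u => (A u /\ ~ S u) /\ ~ T u)).
  { apply Rplus_le_compat_r. apply leb_mono. intros u _ [Ha [Hs|Ht]]; [left; auto|].
    destruct (classic (S u)); [left|right]; auto. }
  lra.
Qed.

Lemma Meas_inter n S T : Meas n S -> Meas n T -> Meas n (fun u => S u /\ T u).
Proof.
  intros HS HT. eapply Meas_ext. apply (Meas_compl n _ (Meas_union n _ _ (Meas_compl n _ HS) (Meas_compl n _ HT))).
  intros u. simpl. split. intros H. split; apply NNPP; intro; apply H; tauto. tauto.
Qed.

Lemma Meas_countable n (T : nat -> (nat -> R) -> Prop) :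
  (forall k, Meas n (T k)) -> Meas n (fun u => exists k, T k u).
Proof.
  intros HT A.
  set (U := fun m u => exists k, (k < m)%nat /\ T k u).
  assert (HU : forall m, Meas n (U m)).
  { induction m.
    - eapply Meas_ext. apply Meas_compl, Meas_true. intros u; unfold U; split; [tauto|]. intros [k [Hk _]]; lia.
    - eapply Meas_ext. apply (Meas_union n _ _ IHm (HT m)). intros u; unfold U; split.
      + intros [[k [Hk H]]|H]; [exists k|exists m]; split; auto; lia.
      + intros [k [Hk H]]. destruct (Nat.eq_dec k m); [subst; right; auto|left; exists k; split; auto; lia]. }
  set (D := fun m u => T m u /\ ~ U m u).
  assert (Hsum : forall m, psum (fun k => leb n (fun u => A u /\ D k u)) m <= leb n (fun u => A u /\ U m u)).
  { induction m.
    - unfold psum; simpl. apply leb_nonneg.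
    - rewrite psum_S. pose proof (HU m (fun u => A u /\ U (S m) u)) as H. cbv beta in H.
      replace (fun u => (A u /\ U (S m) u) /\ U m u) with (fun u => A u /\ U m u) in H.
      replace (fun u => (A u /\ U (S m) u) /\ ~ U m u) with (fun u => A u /\ D m u) in H.
      lra.
      + apply set_ext. intros u. unfold D, U. split.
        * intros [Ha [Ht Hn]]. split; [split; auto|]. exists m; split; auto. auto.
        * intros [[Ha [k [Hk Hkt]]] Hn]. split; auto. split; auto.
          destruct (Nat.eq_dec k m); [subst; auto|]. exfalso; apply Hn. exists k; split; auto; lia.
      + apply set_ext. intros u. unfold U. split.
        * intros [Ha [k [Hk Hkt]]]. split; [split; auto; exists k; split; auto; lia|]. exists k; auto.
        * tauto. }
  assert (Hb : forall m, psum (fun k => leb n (fun u => A u /\ D k u)) m <=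
                         leb n A - leb n (fun u => A u /\ ~ exists k, T k u)).
  { intros m. pose proof (Hsum m). pose proof (HU m A).
    assert (leb n (fun u => A u /\ ~ (exists k, T k u)) <= leb n (fun u => A u /\ ~ U m u)).
    { apply leb_mono. intros u _ [Ha Hn]. split; auto. intros [k [_ Hk]]. apply Hn. exists k; auto. }
    lra. }
  pose proof (leb_csub n (fun k u => A u /\ D k u) _ Hb) as Hc.
  assert (leb n (fun u => A u /\ exists k, T k u) <= leb n (fun u => exists k, A u /\ D k u)).
  { apply leb_mono. intros u _ [Ha Hex].
    destruct (classic (exists k, T k u /\ forall j, (j < k)%nat -> ~ T j u)) as [[k [Hk Hmin]]|Hno].
    - exists k. split; auto. split; auto. intros [j [Hj Htj]]. apply (Hmin j Hj Htj).
    - exfalso. destruct Hex as [k Hk].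
      assert (forall m, forall j, (j <= m)%nat -> ~ T j u).
      { induction m; intros j Hj Htj.
        - apply Hno. exists j. split; auto. intros; lia.
        - destruct (Nat.eq_dec j (S m)). subst. apply Hno. exists (S m). split; auto.
          intros j' Hj'. apply IHm. lia. apply (IHm j); auto; lia. }
      apply (H k k); auto. }
  lra.
Qed.
Open Scope R_scope.

Definition upd (f : nat -> R) (i : nat) (m : R) : nat -> R := fun j => if Nat.eqb j i then m else f j.

Lemma vol_split n a b i m : (i < n)%nat ->
  vol n a (upd b i m) + vol n (upd a i m) b = vol n a b.
Proof.
  induction n; intros Hi; [lia|]. simpl.
  destruct (Nat.eq_dec i n).
  - subst. unfold upd at 2 4. rewrite Nat.eqb_refl.
    rewrite (vol_ext n a (upd b n m) a b), (vol_ext n (upd a n m) b a b).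
    ring. all: intros j Hj; unfold upd; destruct (Nat.eqb_spec j n); [lia|auto].
  - unfold upd at 2 4. destruct (Nat.eqb_spec n i); [lia|].
    rewrite <- (IHn ltac:(lia)). fold (upd b i m) (upd a i m). ring.
Qed.

Lemma leb_cut n A i c : (i < n)%nat ->
  leb n (fun u => A u /\ u i < c) + leb n (fun u => A u /\ c < u i) <= leb n A.
Proof.
  intros Hi. apply leb_ge. intros v (cc & a & b & Hab & Hcov & Hs).
  set (m := fun k => Rmax (a k i) (Rmin (b k i) c)).
  assert (Hm : forall k, a k i <= m k <= b k i).
  { intros k. unfold m. split. apply Rmax_l. apply Rmax_lub. apply Hab. apply Rmin_l. }
  set (t := fun k => if cc k then vol n (a k) (b k) else 0).
  set (t1 := fun k => if cc k then vol n (a k) (upd (b k) i (m k)) else 0).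
  set (t2 := fun k => if cc k then vol n (upd (a k) i (m k)) (b k) else 0).
  assert (Hab1 : forall k j, a k j <= upd (b k) i (m k) j).
  { intros k j. unfold upd. destruct (Nat.eqb j i) eqn:E; [apply Nat.eqb_eq in E; subst; apply Hm|apply Hab]. }
  assert (Hab2 : forall k j, upd (a k) i (m k) j <= b k j).
  { intros k j. unfold upd. destruct (Nat.eqb j i) eqn:E; [apply Nat.eqb_eq in E; subst; apply Hm|apply Hab]. }
  assert (Ht1 : forall k, 0 <= t1 k) by (intros k; unfold t1; destruct (cc k); [apply vol_nonneg; auto|lra]).
  assert (Ht2 : forall k, 0 <= t2 k) by (intros k; unfold t2; destruct (cc k); [apply vol_nonneg; auto|lra]).
  assert (Ht : forall k, t1 k + t2 k = t k).
  { intros k. unfold t1, t2, t. destruct (cc k); [apply vol_split; auto|lra]. }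
  assert (Htn : forall k, 0 <= t k) by (intros k; rewrite <- Ht; specialize (Ht1 k); specialize (Ht2 k); lra).
  destruct (nn_conv t1 v Ht1) as [v1 [Hv1 _]].
  { intros M. apply Rle_trans with (psum t M). apply psum_le. intros k _. rewrite <- Ht. specialize (Ht2 k); lra.
    apply ps_le_lim; auto. }
  destruct (nn_conv t2 v Ht2) as [v2 [Hv2 _]].
  { intros M. apply Rle_trans with (psum t M). apply psum_le. intros k _. rewrite <- Ht. specialize (Ht1 k); lra.
    apply ps_le_lim; auto. }
  assert (E : v1 + v2 = v).
  { apply (isum_unique t). eapply isum_ext; [|apply (isum_plus _ _ _ _ Hv1 Hv2)]. auto. auto. }
  assert (leb n (fun u => A u /\ u i < c) <= v1).
  { apply leb_le_cover. exists cc, a, (fun k => upd (b k) i (m k)). split; [auto|]. split; [|exact Hv1].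
    intros u Hu [HA Hc]. destruct (Hcov u Hu HA) as [k [Hk Hb]]. exists k. split; auto.
    intros j Hj. destruct (Hb j Hj) as [H1 H2]. split; auto. unfold upd.
    destruct (Nat.eqb_spec j i); auto. subst. unfold m. apply Rlt_le_trans with (Rmin (b k i) c).
    apply Rmin_glb_lt; auto. apply Rmax_r. }
  assert (leb n (fun u => A u /\ c < u i) <= v2).
  { apply leb_le_cover. exists cc, (fun k => upd (a k) i (m k)), b. split; [auto|]. split; [|exact Hv2].
    intros u Hu [HA Hc]. destruct (Hcov u Hu HA) as [k [Hk Hb]]. exists k. split; auto.
    intros j Hj. destruct (Hb j Hj) as [H1 H2]. split; auto. unfold upd.
    destruct (Nat.eqb_spec j i); auto. subst. unfold m. apply Rmax_lub_lt; auto.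
    apply Rle_lt_trans with c; auto. apply Rmin_r. }
  lra.
Qed.

Lemma hyper_vol n i c eta : 0 < eta -> 2 * eta <= 3 ->
  vol n (upd (fun _ => -1) i (c - eta)) (upd (fun _ => 2) i (c + eta)) <= 3 ^ n /\
  ((i < n)%nat -> vol n (upd (fun _ => -1) i (c - eta)) (upd (fun _ => 2) i (c + eta)) <= 2 * eta * 3 ^ n).
Proof.
  intros He He3. induction n. simpl. split; [lra|intros; lia].
  assert (H0 : 0 <= vol n (upd (fun _ => -1) i (c - eta)) (upd (fun _ => 2) i (c + eta))).
  { apply vol_nonneg. intros j. unfold upd. destruct (Nat.eqb j i); lra. }
  destruct IHn as [IH1 IH2]. simpl. set (V := vol n _ _) in *. unfold upd. destruct (Nat.eqb_spec n i).
  - assert (0 <= 3 ^ n) by (apply pow_le; lra).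
    replace (c + eta - (c - eta)) with (2 * eta) by ring. split.
    + nra.
    + intros _. nra.
  - split.
    + replace (2 - -1) with 3 by lra. nra.
    + intros Hi. replace (2 - -1) with 3 by lra. assert (Hi' : (i < n)%nat) by lia.
      specialize (IH2 Hi'). nra.
Qed.

Lemma leb_hyper n i c : (i < n)%nat -> leb n (fun u => u i = c) = 0.
Proof.
  intros Hi. apply Rle_antisym; [|apply leb_nonneg].
  apply Rnot_lt_le. intros Hlt. set (e := Rmin (leb n (fun u => u i = c)) 1).
  assert (He : 0 < e) by (unfold e; apply Rmin_glb_lt; lra).
  assert (He1 : e <= 1) by apply Rmin_r.
  assert (He2 : e <= leb n (fun u => u i = c)) by apply Rmin_l.
  assert (H3 : 0 < 3 ^ n) by (apply pow_lt; lra).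
  assert (H31 : 1 <= 3 ^ n) by (apply pow_R1_Rle; lra).
  set (eta := e / (4 * 3 ^ n)).
  assert (Heta : 0 < eta) by (unfold eta; apply Rdiv_lt_0_compat; lra).
  assert (Heta2 : 2 * eta * 3 ^ n = e / 2) by (unfold eta; field; lra).
  assert (Heta3 : 2 * eta <= 3).
  { unfold eta. apply Rle_trans with (2 * (e/4)). apply Rmult_le_compat_l; [lra|].
    unfold Rdiv. apply Rmult_le_compat_l; [lra|]. apply Rinv_le_contravar; lra. lra. }
  destruct (hyper_vol n i c eta Heta Heta3) as [_ Hv]. specialize (Hv Hi).
  assert (leb n (fun u => u i = c) <= vol n (upd (fun _ => -1) i (c - eta)) (upd (fun _ => 2) i (c + eta))).
  { apply leb_le_cover. eapply cover_single; [|reflexivity|].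
    - intros j. unfold upd. destruct (Nat.eqb j i); lra.
    - intros u Hu Hc j Hj. specialize (Hu j Hj). unfold upd. destruct (Nat.eqb_spec j i); [subst; lra|lra]. }
  lra.
Qed.

Lemma Meas_lt n i c : (i < n)%nat -> Meas n (fun u => u i < c).
Proof.
  intros Hi A. pose proof (leb_cut n A i c Hi).
  pose proof (leb_sub2 n (fun u => A u /\ c < u i) (fun u => u i = c)).
  rewrite leb_hyper in H0 by auto.
  assert (leb n (fun u => A u /\ ~ u i < c) <= leb n (fun u => (A u /\ c < u i) \/ u i = c)).
  { apply leb_mono. intros u _ [Ha Hn]. destruct (Rtotal_order (u i) c) as [|[|]]; [tauto|right|left]; auto. }
  lra.
Qed.

Lemma Meas_gt n i c : (i < n)%nat -> Meas n (fun u => c < u i).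
Proof.
  intros Hi A. pose proof (leb_cut n A i c Hi).
  pose proof (leb_sub2 n (fun u => A u /\ u i < c) (fun u => u i = c)).
  rewrite leb_hyper in H0 by auto.
  assert (leb n (fun u => A u /\ ~ c < u i) <= leb n (fun u => (A u /\ u i < c) \/ u i = c)).
  { apply leb_mono. intros u _ [Ha Hn]. destruct (Rtotal_order (u i) c) as [|[|]]; [left|right|]; auto. tauto. }
  lra.
Qed.

Lemma Meas_box n a b : Meas n (in_box n a b).
Proof.
  cut (forall m, (m <= n)%nat -> Meas n (fun u => forall i, (i < m)%nat -> a i < u i < b i)).
  { intros H. apply H; lia. }
  induction m; intros Hm.
  - eapply Meas_ext. apply Meas_true. intros u; split; auto. intros _ i Hi; lia.
  - eapply Meas_ext. apply (Meas_inter n _ _ (IHm ltac:(lia)) (Meas_inter n _ _ (Meas_gt n m (a m) ltac:(lia)) (Meas_lt n m (b m) ltac:(lia)))).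
    intros u. split.
    + intros [H1 [H2 H3]] i Hi. destruct (Nat.eq_dec i m); [subst; auto|apply H1; lia].
    + intros H. split; [intros; apply H; lia|]. apply H; lia.
Qed.

Lemma borel_Meas n T : borel n T -> Meas n T.
Proof.
  induction 1.
  - apply Meas_box.
  - apply Meas_compl; auto.
  - apply Meas_countable; auto.
  - eapply Meas_ext; eauto.
Qed.

Lemma leb_extend n A : leb (S n) A <= leb n A.
Proof.
  apply leb_ge. intros v (c & a & b & Hab & Hcov & Hs). apply leb_le_cover.
  exists c, (fun k => upd (a k) n 0), (fun k => upd (b k) n 1). split.
  { intros k i. unfold upd. destruct (Nat.eqb i n); [lra|auto]. } split.
  - intros u Hu HA. destruct (Hcov u) as [k [Hk Hb]]; auto.
    { intros i Hi. apply Hu. lia. }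
    exists k. split; auto. intros i Hi. unfold upd. destruct (Nat.eqb_spec i n).
    + subst. apply Hu; lia.
    + apply Hb; lia.
  - refine (isum_ext _ _ _ _ Hs). intros k. destruct (c k); [|reflexivity]. simpl.
    rewrite (vol_ext n (upd (a k) n 0) (upd (b k) n 1) (a k) (b k)). unfold upd. rewrite Nat.eqb_refl. ring.
    intros i Hi. unfold upd. destruct (Nat.eqb_spec i n); [lia|auto].
Qed.
Open Scope R_scope.

Definition sumw (n : nat) (F : list bool -> R) : R := sumR (map F (words n)).

Lemma sumR_map_flat (F : list bool -> R) l :
  sumR (map F (flat_map (fun w => (true :: w) :: (false :: w) :: nil) l)) =
  sumR (map (fun w => F (true :: w) + F (false :: w)) l).
Proof. induction l; simpl; [reflexivity|]. rewrite IHl. ring. Qed.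

Lemma sumw_S n F : sumw (S n) F = sumw n (fun w => F (true :: w) + F (false :: w)).
Proof. unfold sumw. simpl. apply sumR_map_flat. Qed.

Lemma sumw_ext n F G : (forall w, F w = G w) -> sumw n F = sumw n G.
Proof. intros H. unfold sumw. f_equal. apply map_ext. auto. Qed.

Lemma words_length n w : In w (words n) -> length w = n.
Proof.
  revert w. induction n; simpl; intros w Hw. destruct Hw as [<-|[]]; reflexivity.
  apply in_flat_map in Hw. destruct Hw as [v [Hv Hw]]. simpl in Hw.
  destruct Hw as [<-|[<-|[]]]; simpl; f_equal; auto.
Qed.

Lemma sumR_le_in {A} (F G : A -> R) l : (forall x, In x l -> F x <= G x) -> sumR (map F l) <= sumR (map G l).
Proof. induction l; intros H; simpl; [lra|]. assert (F a <= G a) by (apply H; left; auto).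
  assert (sumR (map F l) <= sumR (map G l)) by (apply IHl; intros; apply H; right; auto). lra. Qed.

Lemma sumw_le n F G : (forall w, length w = n -> F w <= G w) -> sumw n F <= sumw n G.
Proof. intros H. apply sumR_le_in. intros w Hw. apply H. apply words_length; auto. Qed.

Lemma sumw_plus n F G : sumw n (fun w => F w + G w) = sumw n F + sumw n G.
Proof. unfold sumw. induction (words n); simpl; [ring|]. rewrite IHl. ring. Qed.

Lemma sumw_scal n c F : sumw n (fun w => c * F w) = c * sumw n F.
Proof. unfold sumw. induction (words n); simpl; [ring|]. rewrite IHl. ring. Qed.

Lemma sumw_nonneg n F : (forall w, 0 <= F w) -> 0 <= sumw n F.
Proof. intros H. unfold sumw. induction (words n); simpl; [lra|]. specialize (H a). lra. Qed.

Lemma sumw_S' n F : sumw (S n) F = sumw n (fun w => F (w ++ true :: nil) + F (w ++ false :: nil)).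
Proof.
  revert F. induction n; intros F.
  - unfold sumw; simpl. ring.
  - rewrite sumw_S, IHn, sumw_S. apply sumw_ext. intros w. simpl. ring.
Qed.

Lemma wt_app p w x : wt p (w ++ x :: nil) = wt p w * (if x then p else 1 - p).
Proof. induction w; simpl. ring. rewrite IHw. ring. Qed.

Lemma wt_nonneg p w : 0 <= p <= 1 -> 0 <= wt p w.
Proof. intros Hp. induction w; simpl; [lra|]. apply Rmult_le_pos; auto. destruct a; lra. Qed.

Definition kc (w : list bool) : R := fold_right (fun (b : bool) acc => (if b then 1 else 0) + acc) 0 w.

Lemma kc_app w x : kc (w ++ x :: nil) = kc w + (if x then 1 else 0).
Proof. induction w; simpl. ring. rewrite IHw. ring. Qed.

Lemma kc_nonneg w : 0 <= kc w.
Proof. induction w; simpl; [lra|]. destruct a; lra. Qed.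

Lemma xof_app v x j : (j < length v)%nat -> xof (v ++ x :: nil) j = xof v j.
Proof. intros H. unfold xof. apply app_nth1; auto. Qed.

Definition betaN (tau : scheme) n w := leb n (fun u => forall i, (1 <= i <= n)%nat -> tau i (xof w) u = false).
Definition gammaN (tau : scheme) n w := leb n (fun u => (forall i, (1 <= i < n)%nat -> tau i (xof w) u = false) /\
                         tau n (xof w) u = true).

Lemma KI tau v x : admissible tau ->
  betaN tau (S (length v)) (v ++ x :: nil) + gammaN tau (S (length v)) (v ++ x :: nil) <= betaN tau (length v) v.
Proof.
  intros Had. set (n := length v).
  set (A := fun u => forall i, (1 <= i <= n)%nat -> tau i (xof v) u = false).
  set (T := fun u => tau (S n) (xof (v ++ x :: nil)) u = true).
  assert (HT : Meas (S n) T) by (apply borel_Meas; apply (Had (S n)); lia).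
  pose proof (HT A) as H1. pose proof (leb_extend n A) as H2.
  assert (Hsame : forall i u, (1 <= i <= n)%nat -> tau i (xof (v ++ x :: nil)) u = tau i (xof v) u).
  { intros i u Hi. apply (Had i ltac:(lia)). intros j Hj. apply xof_app. unfold n in Hi. lia. }
  assert (betaN tau (S n) (v ++ x :: nil) <= leb (S n) (fun u => A u /\ ~ T u)).
  { apply leb_mono. intros u _ Hu. split.
    - intros i Hi. rewrite <- Hsame by lia. apply Hu. lia.
    - unfold T. rewrite (Hu (S n)) by lia. discriminate. }
  assert (gammaN tau (S n) (v ++ x :: nil) <= leb (S n) (fun u => A u /\ T u)).
  { apply leb_mono. intros u _ [Hu Ht]. split; auto.
    intros i Hi. rewrite <- Hsame by lia. apply Hu. lia. }
  change (betaN tau n v) with (leb n A). lra.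
Qed.
Open Scope R_scope.

Definition alphaN (tau gamma : scheme) n w := leb n (fun u => (forall i, (1 <= i < n)%nat -> tau i (xof w) u = false) /\
                         tau n (xof w) u = true /\ gamma n (xof w) u = true).

Lemma PrN_gt_eq tau p n : PrN_gt tau p n = sumw n (fun w => wt p w * betaN tau n w).
Proof. reflexivity. Qed.

Lemma PrN_Y1_eq tau gamma p n : PrN_eq_Y1 tau gamma p n = sumw n (fun w => wt p w * alphaN tau gamma n w).
Proof. reflexivity. Qed.

Definition Phi tau p n := sumw n (fun w => wt p w * betaN tau n w * kc w).
Definition Gam tau p n := sumw n (fun w => wt p w * gammaN tau n w * kc w).

Lemma wald_step tau p n : admissible tau -> 0 < p < 1 ->
  Phi tau p (S n) + Gam tau p (S n) <= Phi tau p n + p * PrN_gt tau p n.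
Proof.
  intros Had Hp. unfold Phi, Gam. rewrite <- sumw_plus, PrN_gt_eq, <- sumw_scal, <- sumw_plus, sumw_S'.
  apply sumw_le. intros v Hv.
  rewrite !wt_app, !kc_app.
  pose proof (KI tau v true Had) as K1. pose proof (KI tau v false Had) as K0. rewrite Hv in K1, K0.
  set (W := wt p v). set (K := kc v). set (B := betaN tau n v).
  set (b1 := betaN tau (S n) (v ++ true :: nil)). set (g1 := gammaN tau (S n) (v ++ true :: nil)).
  set (b0 := betaN tau (S n) (v ++ false :: nil)). set (g0 := gammaN tau (S n) (v ++ false :: nil)).
  assert (HW : 0 <= W) by (apply wt_nonneg; lra).
  assert (HK : 0 <= K) by apply kc_nonneg.
  assert (K1' : b1 + g1 <= B) by exact K1. assert (K0' : b0 + g0 <= B) by exact K0. clear K1 K0.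
  assert (E1 : p * (K + 1) * (b1 + g1) <= p * (K + 1) * B) by (apply Rmult_le_compat_l; nra).
  assert (E0 : (1 - p) * K * (b0 + g0) <= (1 - p) * K * B) by (apply Rmult_le_compat_l; nra).
  assert (E : W * (p * (K + 1) * (b1 + g1) + (1 - p) * K * (b0 + g0)) <= W * (p * (K + 1) * B + (1 - p) * K * B))
    by (apply Rmult_le_compat_l; lra).
  simpl. replace (K + 0) with K by ring. lra.
Qed.

Lemma wald tau p M : admissible tau -> 0 < p < 1 ->
  psum (fun n => Gam tau p (S n)) M <= p * psum (PrN_gt tau p) M.
Proof.
  intros Had Hp.
  assert (H : Phi tau p M + psum (fun n => Gam tau p (S n)) M <= p * psum (PrN_gt tau p) M).
  { induction M.
    - unfold Phi, sumw, psum. simpl. lra.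
    - rewrite !psum_S. pose proof (wald_step tau p M Had Hp). lra. }
  assert (0 <= Phi tau p M).
  { apply sumw_nonneg. intros w. apply Rmult_le_pos; [apply Rmult_le_pos|apply kc_nonneg].
    apply wt_nonneg; lra. apply leb_nonneg. }
  lra.
Qed.

Lemma wt_lower p t w : 0 < p < 1 -> 0 <= t <= 1 -> wt p w * (1 - t * kc w) <= wt (p * (1 - t)) w.
Proof.
  intros Hp Ht. induction w as [|b w IH]; simpl. lra.
  assert (HW : 0 <= wt p w) by (apply wt_nonneg; lra).
  assert (HW' : 0 <= wt (p * (1 - t)) w) by (apply wt_nonneg; nra).
  assert (HK : 0 <= kc w) by apply kc_nonneg.
  destruct b.
  - assert (p * (1 - t) * (wt p w * (1 - t * kc w)) <= p * (1 - t) * wt (p * (1 - t)) w) by (apply Rmult_le_compat_l; nra).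
    assert (0 <= p * wt p w * t * t * kc w) by (repeat apply Rmult_le_pos; lra).
    nra.
  - assert ((1 - p) * (wt p w * (1 - t * kc w)) <= (1 - p) * wt (p * (1 - t)) w) by (apply Rmult_le_compat_l; lra).
    assert ((1 - p) * wt (p * (1 - t)) w <= (1 - p * (1 - t)) * wt (p * (1 - t)) w) by (apply Rmult_le_compat_r; nra).
    nra.
Qed.

Lemma isum_minus g h l1 l2 : infinite_sum g l1 -> infinite_sum h l2 -> infinite_sum (fun k => g k - h k) (l1 - l2).
Proof.
  intros H1 H2. apply cv_isum. apply isum_cv in H1. apply isum_cv in H2.
  pose proof (CV_minus _ _ _ _ H1 H2) as H. intros e He. destruct (H e He) as [N HN]. exists N.
  intros n Hn. replace (psum (fun k => g k - h k) (S n)) with (psum g (S n) - psum h (S n)). apply HN; auto.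
  unfold Rminus. rewrite psum_plus. f_equal. replace (fun k => - h k) with (fun k => -1 * h k).
  rewrite psum_scal. ring. apply functional_extensionality; intros; ring.
Qed.

Lemma key Dom f tau gamma p q e : bernoulli_factory Dom f tau gamma ->
  (forall x, Dom x -> 0 < x < 1) -> Dom p -> Dom q -> q < p ->
  infinite_sum (PrN_gt tau p) e -> f p - f q <= (p - q) * e.
Proof.
  intros [Had [Hadg Hbf]] Hdom Hp Hq Hqp He.
  pose proof (Hdom p Hp) as Hp1. pose proof (Hdom q Hq) as Hq1.
  destruct (Hbf p Hp) as [_ Hfp]. destruct (Hbf q Hq) as [_ Hfq].
  pose proof (isum_minus _ _ _ _ Hfp Hfq) as Hd. apply isum_cv in Hd.
  apply (lim_le _ _ _ Hd). intros M.
  set (t := (p - q) / p).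
  assert (Ht : 0 <= t <= 1).
  { unfold t. split. unfold Rdiv. apply Rmult_le_pos; [lra|]. apply Rlt_le, Rinv_0_lt_compat; lra. apply Rmult_le_reg_r with p; [lra|]. unfold Rdiv. rewrite Rmult_assoc, Rinv_l; lra. }
  assert (Hq' : q = p * (1 - t)) by (unfold t; field; lra).
  apply Rle_trans with (t * psum (fun n => Gam tau p (S n)) (S M)).
  - rewrite <- psum_scal. apply psum_le. intros k _.
    rewrite !PrN_Y1_eq. unfold Gam. rewrite <- sumw_scal.
    replace (sumw (S k) (fun w => wt p w * alphaN tau gamma (S k) w) - sumw (S k) (fun w => wt q w * alphaN tau gamma (S k) w))
      with (sumw (S k) (fun w => (wt p w - wt q w) * alphaN tau gamma (S k) w)).
    2:{ rewrite (sumw_ext (S k) _ (fun w => wt p w * alphaN tau gamma (S k) w + -1 * (wt q w * alphaN tau gamma (S k) w))).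
        rewrite sumw_plus, sumw_scal. ring. intros; ring. }
    apply sumw_le. intros w _.
    pose proof (wt_lower p t w Hp1 Ht) as Hl. rewrite <- Hq' in Hl.
    assert (Ha : 0 <= alphaN tau gamma (S k) w) by apply leb_nonneg.
    assert (Hag : alphaN tau gamma (S k) w <= gammaN tau (S k) w).
    { apply leb_mono. intros u _ [H1 [H2 _]]. split; auto. }
    assert (HW : 0 <= wt p w) by (apply wt_nonneg; lra).
    assert (HK : 0 <= kc w) by apply kc_nonneg.
    assert (X1 : (wt p w - wt q w) * alphaN tau gamma (S k) w <= (t * wt p w * kc w) * alphaN tau gamma (S k) w)
      by (apply Rmult_le_compat_r; [lra|]; nra).
    assert (X2 : (t * wt p w * kc w) * alphaN tau gamma (S k) w <= (t * wt p w * kc w) * gammaN tau (S k) w)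
      by (apply Rmult_le_compat_l; [apply Rmult_le_pos; [apply Rmult_le_pos|]; lra|auto]).
    lra.
  - pose proof (wald tau p (S M) Had Hp1).
    assert (psum (PrN_gt tau p) (S M) <= e).
    { apply ps_le_lim; auto. intros n. rewrite PrN_gt_eq. apply sumw_nonneg. intros w.
      apply Rmult_le_pos; [apply wt_nonneg; lra|apply leb_nonneg]. }
    assert (0 <= psum (PrN_gt tau p) (S M)).
    { apply psum_nonneg. intros n. rewrite PrN_gt_eq. apply sumw_nonneg. intros w.
      apply Rmult_le_pos; [apply wt_nonneg; lra|apply leb_nonneg]. }
    assert (t * psum (fun n => Gam tau p (S n)) (S M) <= t * (p * psum (PrN_gt tau p) (S M))) by (apply Rmult_le_compat_l; lra).
    assert (t * (p * psum (PrN_gt tau p) (S M)) <= t * (p * e)) by (apply Rmult_le_compat_l; [lra|]; apply Rmult_le_compat_l; lra).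
    replace ((p - q) * e) with (t * (p * e)) by (unfold t; field; lra). lra.
Qed.

Lemma deriv_bound Dom f tau gamma p e d : bernoulli_factory Dom f tau gamma -> open_set Dom ->
  (forall x, Dom x -> 0 < x < 1) -> Dom p -> derivable_pt_lim f p d ->
  infinite_sum (PrN_gt tau p) e -> d <= e.
Proof.
  intros Hbf Hop Hdom Hp Hd He. apply Rnot_lt_le. intros Hlt.
  destruct (Hd (d - e)) as [del Hdel]; [lra|].
  destruct (Hop p Hp) as [del' Hdel'].
  pose proof (Hdom p Hp) as Hp1.
  set (h := Rmin (Rmin del del') p / 2).
  assert (Hm1 : Rmin (Rmin del del') p <= del) by (eapply Rle_trans; [apply Rmin_l|apply Rmin_l]).
  assert (Hm2 : Rmin (Rmin del del') p <= del') by (eapply Rle_trans; [apply Rmin_l|apply Rmin_r]).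
  assert (Hm3 : Rmin (Rmin del del') p <= p) by apply Rmin_r.
  assert (Hm0 : 0 < Rmin (Rmin del del') p) by (repeat apply Rmin_glb_lt; try apply cond_pos; lra).
  assert (Hh : 0 < h < p) by (unfold h; lra).
  assert (Hq : Dom (p - h)).
  { apply Hdel'. unfold disc. replace (p - h - p) with (- h) by ring. rewrite Rabs_Ropp, Rabs_right by lra. unfold h; lra. }
  pose proof (key Dom f tau gamma p (p - h) e Hbf Hdom Hp Hq ltac:(lra) He) as Hk.
  specialize (Hdel (- h) ltac:(lra)). rewrite Rabs_Ropp, Rabs_right in Hdel by lra.
  specialize (Hdel ltac:(unfold h; lra)).
  replace (p + - h) with (p - h) in Hdel by ring.
  replace ((f (p - h) - f p) / - h) with ((f p - f (p - h)) / h) in Hdel by (field; lra).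
  apply Rabs_def2 in Hdel.
  assert ((f p - f (p - h)) / h <= e).
  { apply Rmult_le_reg_r with h; [lra|]. unfold Rdiv. rewrite Rmult_assoc, Rinv_l by lra.
    replace (p - (p - h)) with h in Hk by ring. lra. }
  lra.
Qed.

Theorem theorem4 (S : R -> Prop) (f : R -> R) :
  open_set S ->
  (forall p, S p -> 0 < p < 1) ->
  (forall e, e > 0 -> exists p, S p /\ p < e) ->
  (forall p, S p -> 0 < f p < 1) ->
  (forall p, S p -> derivable_pt f p) ->
  (exists C delta, C > 0 /\ delta > 0 /\
     forall p d, S p -> p < delta -> derivable_pt_lim f p d -> C * (f p / p) <= d) ->
  forall tau gamma : scheme,
    bernoulli_factory S f tau gamma ->
    fast S tau ->
    exists C' delta', C' > 0 /\ delta' > 0 /\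
      forall p, S p -> p < delta' -> ExpN_ge tau p (C' * (f p / p)).
Proof.
  intros Hop Hdom Hacc Hf Hder [C [delta [HC [Hdel Hbound]]]] tau gamma Hbf Hfast.
  exists C, delta. split; [auto|split; [auto|]]. intros p Hp Hpd e He.
  destruct (Hder p Hp) as [d Hd].
  apply Rle_trans with d. apply Hbound; auto.
  apply (deriv_bound S f tau gamma p e d Hbf Hop Hdom Hp Hd He).
Qed.
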